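(* Let $\{S_i\}_{i\in\mathcal I}$ be a finite family of contracting similarities on a compact subset $X$ of $\mathbb{R}^n$, let $C\subseteq X$ be non-empty and compact, let $F_C$ be the inhomogeneous attractor and $F_\emptyset$ the attractor. Then \[ \max\{\overline{\dim}_{\mathrm B}F_\emptyset,\ \overline{\dim}_{\mathrm B}C\}\le\overline{\dim}_{\mathrm B}F_C\le\max\{s^*,\ \overline{\dim}_{\mathrm B}C\}, \] where $s^*$ is the modified similarity dimension defined in the context.
   Context: $F_C$ is the unique non-empty compact set with $F_C=\bigcup_iS_i(F_C)\cup C$ and $F_\emptyset$ the unique non-empty compact set with $F_\emptyset=\bigcup_iS_i(F_\emptyset)$. Let $c_i$ be the contraction ratio of $S_i$. $\mathcal I^*$ is the set of finite words over $\mathcal I$ (the empty word corresponds to the identity map with ratio $1$); for $I=(i_1,\dots,i_k)$, $S_I=S_{i_1}\circ\cdots\circ S_{i_k}$, $c_I=c_{i_1}\cdots c_{i_k}$, and $I^\dagger=(i_1,\dots,i_{k-1})$. For $r\in(0,1)$, $\mathcal I(r)=\{I\in\mathcal I^*: c_I\le r<c_{I^\dagger}\}$. Write $I\sim J$ if $S_I=S_J$, and let $\mathcal I(r)/\sim$ denote a set of representatives of the equivalence classes in $\mathcal I(r)$. Let $\alpha(r)$ be the unique solution of $\sum_{I\in\mathcal I(r)/\sim}c_I^{\alpha(r)}=1$. The modified similarity dimension is $s^*=\lim_{r\to0}\alpha(r)=\inf_{r\in(0,1)}\alpha(r)$. $\overline{\dim}_{\mathrm B}$ is upper box dimension. *)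

(* Defs.v *)
From HB Require Import structures.
From mathcomp Require Import all_boot all_order all_algebra.
From mathcomp Require Import all_classical all_reals all_analysis.
Set Implicit Arguments. Unset Strict Implicit. Unset Printing Implicit Defensive.
Import Order.TTheory GRing.Theory Num.Theory.
Import numFieldNormedType.Exports.
Local Open Scope classical_set_scope.
Local Open Scope ring_scope.

Section Defs.
Variables (R : realType) (n : nat).
Local Notation V := 'rV[R]_n.

Definition eucl_dist (x y : V) : R :=
  Num.sqrt (\sum_(i < n) (x ord0 i - y ord0 i) ^+ 2).

Definition coverable (A : set V) (d : R) (k : nat) : Prop :=
  exists U : 'I_k -> set V,
    (forall j x y, U j x -> U j y -> eucl_dist x y <= d) /\
    A `<=` \bigcup_(j in setT) U j.

(* N_d(A): the smallest number of sets of diameter at most d covering A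
   (+oo if there is no finite cover) *)
Definition covnum (A : set V) (d : R) : \bar R :=
  ereal_inf [set (k%:R)%:E | k in coverable A d].

Definition box_ratio (A : set V) (d : R) : \bar R :=
  match covnum A d with
  | EFin N => (ln N / - ln d)%:E
  | _ => +oo%E
  end.

(* upper box dimension: limsup_{d -> 0+} log N_d(A) / (- log d) *)
Definition upper_box_dim (A : set V) : \bar R :=
  ereal_inf [set ereal_sup [set box_ratio A d | d in [set d | 0 < d < e]]
            | e in [set e : R | 0 < e < 1]].

Variable (I : finType).

Definition wmap (S : I -> V -> V) (w : seq I) : V -> V :=
  foldr (fun i f => S i \o f) id w.

Definition wratio (c : I -> R) (w : seq I) : R := \prod_(i <- w) c i.

Definition wdagger (w : seq I) : seq I := take (size w).-1 w.

Definition in_Ir (c : I -> R) (r : R) (w : seq I) : Prop :=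
  wratio c w <= r < wratio c (wdagger w).

Definition wequiv (X : set V) (S : I -> V -> V) (w v : seq I) : Prop :=
  forall x, X x -> wmap S w x = wmap S v x.

(* a solves  sum_{I in I(r)/~} c_I^a = 1  for a set of representatives reps *)
Definition alpha_spec (X : set V) (S : I -> V -> V) (c : I -> R) (r a : R)
  : Prop :=
  exists reps : seq (seq I),
    [/\ uniq reps,
        (forall w, w \in reps -> in_Ir c r w),
        (forall w, in_Ir c r w -> exists2 v, v \in reps & wequiv X S w v),
        (forall v1 v2, v1 \in reps -> v2 \in reps -> wequiv X S v1 v2 -> v1 = v2)
      & \sum_(w <- reps) (wratio c w) `^ a = 1].

Definition alpha (X : set V) (S : I -> V -> V) (c : I -> R) (r : R) : R :=
  xget 0 [set a | alpha_spec X S c r a].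

Definition s_star (X : set V) (S : I -> V -> V) (c : I -> R) : R :=
  inf [set alpha X S c r | r in [set r : R | 0 < r < 1]].

End Defs.

(* Main.v *)
Require Import Defs.
From HB Require Import structures.
From mathcomp Require Import all_boot all_order all_algebra.
From mathcomp Require Import all_classical all_reals all_analysis.
From mathcomp Require Import zify ring lra.
Import Order.TTheory GRing.Theory Num.Theory.
Import numFieldNormedType.Exports.
Local Open Scope classical_set_scope.
Local Open Scope ring_scope.
Set Implicit Arguments. Unset Strict Implicit. Unset Printing Implicit Defensive.

Section Cover.
Variables (R : realType) (n : nat).
Local Notation V := 'rV[R]_n.
Local Notation dist := (@eucl_dist R n).

Lemma dist_ge0 (x y : V) : 0 <= dist x y.
Proof. exact: sqrtr_ge0. Qed.

Lemma coverable_sub (A B : set V) d k :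
  A `<=` B -> coverable B d k -> coverable A d k.
Proof.
by move=> AB [U [HU HB]]; exists U; split => // x /AB /HB.
Qed.

Lemma coverable_le (A : set V) d d' k :
  d <= d' -> coverable A d k -> coverable A d' k.
Proof.
move=> dd [U [HU HB]]; exists U; split => // j x y Ux Uy.
exact: le_trans (HU _ _ _ Ux Uy) dd.
Qed.

Lemma coverable_widen (A : set V) d k m :
  (k <= m)%N -> coverable A d k -> coverable A d m.
Proof.
move=> km [U [HU HB]].
exists (fun j : 'I_m => [set x | exists i : 'I_k, nat_of_ord i = nat_of_ord j /\ U i x]).
split.
  move=> j x y [i1 [e1 U1]] [i2 [e2 U2]].
  have e12 : i1 = i2 by apply: val_inj => /=; rewrite e1 e2.
  by subst i2; exact: HU U1 U2.
move=> x /HB [i _ Uix].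
have im : (i < m)%N by apply: leq_trans (ltn_ord i) km.
by exists (Ordinal im) => //; exists i.
Qed.

Lemma coverableU (A B : set V) d k m :
  coverable A d k -> coverable B d m -> coverable (A `|` B) d (k + m).
Proof.
move=> [U [HU HA]] [W [HW HB]].
exists (fun j : 'I_(k + m) =>
  [set x | (exists i : 'I_k, nat_of_ord i = nat_of_ord j /\ U i x) \/
           (exists i : 'I_m, (k + nat_of_ord i = nat_of_ord j)%N /\ W i x)]).
split.
  move=> j x y [[i1 [e1 U1]]|[i1 [e1 U1]]] [[i2 [e2 U2]]|[i2 [e2 U2]]].
  - have e12 : i1 = i2 by apply: val_inj => /=; rewrite e1 e2.
    by subst i2; exact: HU U1 U2.
  - have := ltn_ord i1; lia.
  - have := ltn_ord i2; lia.
  - have e12 : i1 = i2 by apply: val_inj => /=; lia.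
    by subst i2; exact: HW U1 U2.
move=> x [/HA [i _ Uix]|/HB [i _ Wix]].
  have im : (i < k + m)%N by apply: leq_trans (ltn_ord i) (leq_addr _ _).
  by exists (Ordinal im) => //; left; exists i.
have im : (k + i < k + m)%N by rewrite ltn_add2l.
by exists (Ordinal im) => //; right; exists i.
Qed.

Lemma coverable_one (A : set V) d :
  (forall x y, A x -> A y -> dist x y <= d) -> coverable A d 1.
Proof.
move=> HA; exists (fun=> A); split => // x Ax.
by exists ord0.
Qed.

Lemma coverable_img (X A : set V) (f : V -> V) (c d : R) k :
  A `<=` X -> (forall x y, X x -> X y -> dist (f x) (f y) = c * dist x y) ->
  0 <= c -> coverable A d k -> coverable (f @` A) (c * d) k.
Proof.
move=> AX Hf c0 [U [HU HA]].
exists (fun j => f @` (U j `&` X)); split.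
  move=> j _ _ [x [Ux Xx] <-] [y [Uy Xy] <-].
  by rewrite Hf // ler_wpM2l // (HU _ _ _ Ux Uy).
move=> _ [x Ax <-].
have [j _ Ujx] := HA x Ax.
by exists j => //; exists x => //; split => //; exact: AX.
Qed.

Lemma covnum_le (A : set V) d k :
  coverable A d k -> (covnum A d <= (k%:R)%:E)%E.
Proof. by move=> H; apply: ereal_inf_lbound; exists k. Qed.

Lemma coverable_gt0 (A : set V) d k : A !=set0 -> coverable A d k -> (0 < k)%N.
Proof.
move=> [x Ax] [U [_ HA]]; case: k U HA => // U HA.
by have [[j jl] _ _] := HA x Ax.
Qed.

Lemma covnum_ge1 (A : set V) d : A !=set0 -> (1 <= covnum A d)%E.
Proof.
move=> A0; apply: le_ereal_inf_tmp => _ [k Hk <-].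
rewrite lee_fin ler1n; exact: coverable_gt0 Hk.
Qed.

Lemma covnum_sub (A B : set V) d : A `<=` B -> (covnum A d <= covnum B d)%E.
Proof.
move=> AB; apply: le_ereal_inf_tmp => _ [k Hk <-].
apply: ereal_inf_lbound; exists k => //; exact: coverable_sub Hk.
Qed.

Lemma covnum_lt (A : set V) d x :
  (covnum A d < x%:E)%E -> exists k, coverable A d k /\ k%:R < x.
Proof.
move=> /ereal_inf_lt [_ [k Hk <-]]; rewrite lte_fin => kx.
by exists k.
Qed.


Lemma dlog_gt0 (d : R) : 0 < d < 1 -> 0 < - ln d.
Proof. by move=> hd; rewrite oppr_gt0 ln_lt0. Qed.

Lemma box_ratio_mono (A B : set V) d : A `<=` B -> A !=set0 -> 0 < d < 1 ->
  (box_ratio A d <= box_ratio B d)%E.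
Proof.
move=> AB A0 hd; rewrite /box_ratio.
have B0 : B !=set0 by case: A0 => x /AB ?; exists x.
have hA := covnum_ge1 d A0; have hB := covnum_ge1 d B0.
have hAB := covnum_sub d AB.
case eB: (covnum B d) => [NB||] //; last by rewrite eB in hB.
case eA: (covnum A d) => [NA||]; rewrite ?eA ?eB in hA hAB => //.
rewrite lee_fin ler_pM2r ?invr_gt0 ?dlog_gt0 //.
rewrite lee_fin in hA; rewrite lee_fin in hAB.
rewrite ler_ln ?posrE //; last exact: lt_le_trans ltr01 (le_trans hA hAB).
exact: lt_le_trans ltr01 hA.
by rewrite leey.
Qed.

Lemma box_ratio_ub (A : set V) d k (b : R) : A !=set0 -> 0 < d < 1 ->
  coverable A d k -> k%:R <= b -> (box_ratio A d <= (ln b / - ln d)%:E)%E.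
Proof.
move=> A0 hd Hk kb; rewrite /box_ratio.
have h1 := covnum_ge1 d A0; have h2 := covnum_le Hk.
case eA: (covnum A d) => [N||]; rewrite ?eA in h1 h2 => //.
rewrite lee_fin in h1; rewrite lee_fin in h2.
rewrite lee_fin ler_pM2r ?invr_gt0 ?dlog_gt0 //.
rewrite ler_ln ?posrE; [exact: le_trans h2 kb| exact: lt_le_trans ltr01 h1|].
exact: lt_le_trans ltr01 (le_trans h1 (le_trans h2 kb)).
Qed.

Lemma box_ratio_lt (A : set V) d (t : R) : A !=set0 -> 0 < d < 1 ->
  (box_ratio A d < t%:E)%E -> exists k, coverable A d k /\ k%:R < d `^ (- t).
Proof.
move=> A0 hd; rewrite /box_ratio.
have h1 := covnum_ge1 d A0.
case eA: (covnum A d) => [N||] //; rewrite ?eA in h1 => // hlt.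
apply: covnum_lt; rewrite eA lte_fin.
rewrite lte_fin in hlt; rewrite lee_fin in h1.
have hdg := dlog_gt0 hd.
rewrite ltr_pdivrMr // in hlt.
have d0 : 0 < d by case/andP: hd.
rewrite -ltr_ln ?posrE ?powR_gt0 //; last exact: lt_le_trans ltr01 h1.
by rewrite ln_powR mulNr -mulrN.
Qed.

Definition bsup (A : set V) (e : R) :=
  ereal_sup [set box_ratio A d | d in [set d | 0 < d < e]].

Lemma ubd_mono (A B : set V) : A `<=` B -> A !=set0 ->
  (upper_box_dim A <= upper_box_dim B)%E.
Proof.
move=> AB A0; apply: le_ereal_inf_tmp => _ [e he <-].
apply: le_trans (ereal_inf_lbound _) _; first by exists e.
apply: ge_ereal_sup => _ [d hd <-].
apply: le_trans (box_ratio_mono AB A0 _) _.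
  by case/andP: he => e0 e1; case/andP: hd => d0 de; rewrite d0 /= (lt_trans de e1).
by apply: ereal_sup_ubound; exists d.
Qed.

Lemma ubd_lt (A : set V) (t : R) : (upper_box_dim A < t%:E)%E ->
  exists e, 0 < e < 1 /\ forall d, 0 < d < e -> (box_ratio A d < t%:E)%E.
Proof.
move=> /ereal_inf_lt [_ [e he <-] hlt].
exists e; split => // d hd.
apply: le_lt_trans hlt; apply: ereal_sup_ubound; by exists d.
Qed.

Lemma ubd_le (A : set V) (x : \bar R) (e : R) : 0 < e < 1 ->
  (forall d, 0 < d < e -> (box_ratio A d <= x)%E) -> (upper_box_dim A <= x)%E.
Proof.
move=> he H; apply: le_trans (ereal_inf_lbound _) _; first by exists e.
by apply: ge_ereal_sup => _ [d hd <-]; apply: H.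
Qed.

End Cover.

Section Geo.
Variable R : realType.

Lemma bernoulli_ineq (h : R) m : 0 <= h -> 1 + m%:R * h <= (1 + h) ^+ m.
Proof.
move=> h0; elim: m => [|m IH]; first by rewrite mul0r addr0 expr0.
rewrite exprS -natr1 mulrDl mul1r.
have hm : 0 <= m%:R * h by rewrite mulr_ge0.
have : (1 + h) * (1 + m%:R * h) <= (1 + h) * (1 + h) ^+ m.
  by rewrite ler_wpM2l // addr_ge0.
apply: le_trans.
rewrite mulrDr mulr1 mulrDl mul1r.
have : 0 <= h * (m%:R * h) by rewrite mulr_ge0.
lra.
Qed.

Lemma geo_small (q eps : R) : 0 < q < 1 -> 0 < eps -> exists L, q ^+ L < eps.
Proof.
move=> /andP[q0 q1] e0.
set h := q^-1 - 1.
have h0 : 0 < h by rewrite /h subr_gt0 invf_gt1.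
have b0 : 0 <= (eps * h)^-1 by rewrite invr_ge0 mulr_ge0 // ltW.
exists (Num.Def.archi_bound (eps * h)^-1).
set L := Num.Def.archi_bound _.
have hL := archi_boundP b0; rewrite -/L in hL.
have := bernoulli_ineq L (ltW h0).
have e1 : 1 + h = q^-1 by rewrite /h addrC subrK.
rewrite e1 exprVn => hb.
have hq : 0 < q ^+ L by rewrite exprn_gt0.
have : eps^-1 < (q ^+ L)^-1.
  apply: lt_le_trans hb.
  have : eps^-1 < L%:R * h.
    by rewrite -ltr_pdivrMr // -invfM.
  lra.
by rewrite ltf_pV2 ?posrE.
Qed.

End Geo.

Section Words.
Variables (R : realType) (n : nat) (I : finType).
Local Notation V := 'rV[R]_n.
Local Notation dist := (@eucl_dist R n).
Variables (X : set V) (S : I -> V -> V) (c : I -> R).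
Hypothesis hc : forall i, 0 < c i < 1.
Hypothesis hSX : forall i x, X x -> X (S i x).
Hypothesis hsim : forall i x y, X x -> X y ->
  dist (S i x) (S i y) = c i * dist x y.

Lemma wmap_cat v w x : wmap S (v ++ w) x = wmap S v (wmap S w x).
Proof. by elim: v => [|i v IH] //=; rewrite IH. Qed.

Lemma wmap_cons i w x : wmap S (i :: w) x = S i (wmap S w x).
Proof. by []. Qed.

Lemma wratio_cons i w : wratio c (i :: w) = c i * wratio c w.
Proof. by rewrite /wratio big_cons. Qed.

Lemma wratio_cat v w : wratio c (v ++ w) = wratio c v * wratio c w.
Proof. by rewrite /wratio big_cat. Qed.

Lemma wratio_gt0 w : 0 < wratio c w.
Proof.
elim: w => [|i w IH]; first by rewrite /wratio big_nil.
by rewrite wratio_cons mulr_gt0 //; case/andP: (hc i).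
Qed.

Lemma wratio_le1 w : wratio c w <= 1.
Proof.
elim: w => [|i w IH]; first by rewrite /wratio big_nil.
rewrite wratio_cons; case/andP: (hc i) => c0 c1.
by rewrite mulr_ile1 // ?(ltW c0) ?(ltW c1) ?(ltW (wratio_gt0 w)).
Qed.

Lemma wratio_pow (q : R) w : (forall i, c i <= q) -> wratio c w <= q ^+ size w.
Proof.
move=> hq; elim: w => [|i w IH]; first by rewrite /wratio big_nil.
rewrite wratio_cons /= exprS; apply: ler_pM => //.
- by case/andP: (hc i) => /ltW.
- exact: ltW (wratio_gt0 w).
Qed.

Lemma wmap_X w x : X x -> X (wmap S w x).
Proof. by elim: w => [|i w IH] //= Xx; apply: hSX; apply: IH. Qed.

Lemma wmap_sim w x y : X x -> X y ->
  dist (wmap S w x) (wmap S w y) = wratio c w * dist x y.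
Proof.
move=> Xx Xy; elim: w => [|i w IH]; first by rewrite /wratio big_nil mul1r.
rewrite !wmap_cons hsim; [|exact: wmap_X|exact: wmap_X].
by rewrite IH wratio_cons mulrA.
Qed.

Lemma exists_q : exists q, 0 < q < 1 /\ forall i, c i <= q.
Proof.
suff [q [hq Hq]] : exists q, 0 < q < 1 /\ forall i, i \in enum I -> c i <= q.
  by exists q; split => // i; apply: Hq; rewrite mem_enum.
elim: (enum I) => [|j s [q [hq Hq]]].
  by exists (2^-1); split => //; rewrite invr_gt0 ltr0n invf_lt1 ?ltr1n.
exists (Num.max q (c j)); split.
  case/andP: hq => q0 q1; case/andP: (hc j) => c0 c1.
  by rewrite lt_max q0 /= gt_max q1 c1.
move=> i; rewrite inE => /orP[/eqP ->|/Hq h]; first by rewrite le_max lexx orbT.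
by rewrite le_max h.
Qed.

Fixpoint words (m : nat) : seq (seq I) :=
  if m is m'.+1 then [::] :: [seq i :: w | i <- enum I, w <- words m']
  else [:: [::]].

Lemma words_mem m w : (size w <= m)%N -> w \in words m.
Proof.
elim: m w => [|m IH] [|i w] //=; rewrite ?inE ?eqxx //.
rewrite ltnS => hw; apply/orP; right.
by apply: (allpairs_f (fun i w => i :: w)); rewrite ?mem_enum //; apply: IH.
Qed.

End Words.

Section Topo.
Variables (R : realType) (n : nat).
Local Notation V := 'rV[R]_n.
Local Notation dist := (@eucl_dist R n).

Lemma coord_le_dist (x y : V) i : `|x ord0 i - y ord0 i| <= dist x y.
Proof.
rewrite /eucl_dist -sqrtr_sqr ler_sqrt ?sumr_ge0 //; last by move=> j _; exact: sqr_ge0.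
rewrite (bigD1 i) //= lerDl sumr_ge0 // => j _; exact: sqr_ge0.
Qed.

Lemma norm_le_dist (x y : V) : `|x - y| <= dist x y.
Proof.
have -> : `|x - y| = mx_norm (x - y) by [].
rewrite mx_normrE; apply: bigmax_le; first exact: sqrtr_ge0.
move=> [i j] _ /=; rewrite !mxE (ord1 i); exact: coord_le_dist.
Qed.

Lemma coord_le_norm (x : V) i : `|x ord0 i| <= `|x|.
Proof.
have -> : `|x| = mx_norm x by [].
rewrite mx_normrE.
exact: (le_bigmax 0 (fun ij : 'I_1 * 'I_n => `|x ij.1 ij.2|) (ord0, i)).
Qed.

Lemma X_bounded (X : set V) : compact X ->
  exists D, 0 < D /\ forall x y, X x -> X y -> dist x y <= D.
Proof.
move=> /compact_bounded [M [Mr HM]].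
set B := `|M| + 1.
have HB : forall x, X x -> `|x| <= B.
  by apply: HM; rewrite /B (le_lt_trans (real_ler_norm Mr)) // ltrDl.
have B0 : 0 <= B by rewrite /B addr_ge0.
exists (Num.sqrt (((2 * B) ^+ 2) *+ n) + 1); split.
  by rewrite ltr_wpDl ?sqrtr_ge0.
move=> x y Xx Xy.
suff h : dist x y <= Num.sqrt (((2 * B) ^+ 2) *+ n) by apply: le_trans h _; rewrite lerDl.
rewrite /eucl_dist ler_sqrt; last by rewrite mulrn_wge0 // sqr_ge0.
have -> : (2 * B) ^+ 2 *+ n = \sum_(i < n) (2 * B) ^+ 2.
  by rewrite sumr_const card_ord.
apply: ler_sum => i _.
have hx := le_trans (coord_le_norm x i) (HB x Xx).
have hy := le_trans (coord_le_norm y i) (HB y Xy).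
move: hx hy; rewrite !ler_norml => /andP[hx1 hx2] /andP[hy1 hy2].
have : - (2 * B) <= x ord0 i - y ord0 i <= 2 * B by apply/andP; split; lra.
move=> /andP[h1 h2].
nra.
Qed.

End Topo.

Section Sub.
Variables (R : realType) (n : nat) (I : finType).
Local Notation V := 'rV[R]_n.
Local Notation dist := (@eucl_dist R n).
Variables (X : set V) (S : I -> V -> V) (c : I -> R).
Hypothesis hc : forall i, 0 < c i < 1.
Hypothesis hSX : forall i x, X x -> X (S i x).
Hypothesis hsim : forall i x y, X x -> X y ->
  dist (S i x) (S i y) = c i * dist x y.
Variables (FC F0 : set V).
Hypothesis hFCX : FC `<=` X.
Hypothesis hFC0 : FC !=set0.
Hypothesis hFCc : compact FC.
Hypothesis hT : forall i x, FC x -> FC (S i x).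
Hypothesis hF0X : F0 `<=` X.
Hypothesis hF0 : forall x, F0 x -> exists i y, F0 y /\ x = S i y.

Lemma F0_iter k x : F0 x -> exists w y, size w = k /\ F0 y /\ x = wmap S w y.
Proof.
move=> F0x; elim: k => [|k [w [y [sw [F0y ->]]]]]; first by exists [::], x.
have [i [y' [F0y' ->]]] := hF0 F0y.
exists (w ++ [:: i]), y'; split; first by rewrite size_cat sw addn1.
by split => //; rewrite wmap_cat.
Qed.

Lemma FC_iter w x : FC x -> FC (wmap S w x).
Proof. by elim: w => [|i w IH] //= Fx; apply: hT; apply: IH. Qed.

Lemma F0_sub_FC (D : R) : 0 < D -> (forall x y, X x -> X y -> dist x y <= D) ->
  F0 `<=` FC.
Proof.
move=> D0 HD x F0x.
have cl : closed FC by apply: compact_closed => //; exact: norm_hausdorff.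
suff hx : closure FC x by rewrite ((closure_id FC).1 cl).
move=> B /nbhs_ballP [e e0 HB].
have [q [hq Hq]] := exists_q hc.
have [k hk] := geo_small hq (divr_gt0 e0 D0).
have [w [y [sw [F0y ex]]]] := F0_iter k F0x; subst x.
have [z Fz] := hFC0.
exists (wmap S w z); split; first exact: FC_iter.
apply: HB; rewrite -ball_normE /=.
apply: le_lt_trans (norm_le_dist _ _) _.
rewrite (wmap_sim hSX hsim); [|exact: hF0X|exact: hFCX].
apply: le_lt_trans (_ : q ^+ k * D < e); last by rewrite -ltr_pdivlMr.
apply: ler_pM; [exact: ltW (wratio_gt0 hc w)|exact: dist_ge0| |].
  by rewrite -sw; exact: wratio_pow.
by apply: HD; [exact: hF0X|exact: hFCX].
Qed.

End Sub.

Section Alpha.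
Variables (R : realType) (n : nat) (I : finType).
Local Notation V := 'rV[R]_n.
Local Notation dist := (@eucl_dist R n).
Variables (X : set V) (S : I -> V -> V) (c : I -> R).
Hypothesis hc : forall i, 0 < c i < 1.

Fixpoint dedup (s : seq (seq I)) : seq (seq I) :=
  if s is w :: s' then
    let r := dedup s' in
    if has (fun v => `[< wequiv X S w v >]) r then r else w :: r
  else [::].

Lemma dedup_sub s v : v \in dedup s -> v \in s.
Proof.
elim: s => [|w s IH] //=.
case: ifP => _; first by move/IH; rewrite inE => ->; rewrite orbT.
by rewrite !inE => /orP[->|/IH ->] //; rewrite orbT.
Qed.

Lemma dedup_cover s w : w \in s -> exists2 v, v \in dedup s & wequiv X S w v.
Proof.
elim: s => [|w' s IH] //=; rewrite inE => /orP[/eqP ->|/IH [v hv ev]].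
  case: ifP => [/hasP [v hv /asboolP ev]|_]; first by exists v.
  by exists w' => //; rewrite inE eqxx.
by exists v => //; case: ifP => _ //; rewrite inE hv orbT.
Qed.

Lemma dedup_inj s v1 v2 : v1 \in dedup s -> v2 \in dedup s ->
  wequiv X S v1 v2 -> v1 = v2.
Proof.
elim: s => [|w s IH] //=.
case: ifP => [_|/negbT/hasPn hn]; first exact: IH.
rewrite !inE => /orP[/eqP->|h1] /orP[/eqP->|h2] //.
- by move=> e; have := hn _ h2; rewrite (asboolT e).
- move=> e; have : wequiv X S w v1 by move=> x Xx; rewrite e.
  by move=> e'; have := hn _ h1; rewrite (asboolT e').
- exact: IH.
Qed.

Lemma dedup_uniq s : uniq (dedup s).
Proof.
elim: s => [|w s IH] //=.
case: ifP => [_|/negbT/hasPn hn] //=; rewrite IH andbT.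
apply/negP => hw; have := hn _ hw.
by have -> : `[< wequiv X S w w >] by apply/asboolP.
Qed.

Lemma wdagger_rcons (p : seq I) (i : I) : wdagger (p ++ [:: i]) = p.
Proof. by rewrite /wdagger size_cat addn1 /= take_size_cat. Qed.

Lemma Ir_size (q r : R) L w : 0 < q < 1 -> (forall i, c i <= q) -> q ^+ L < r ->
  in_Ir c r w -> (size w <= L)%N.
Proof.
move=> /andP[q0 q1] hq hL /andP[_ hw].
rewrite leqNgt; apply/negP => hs.
have := wratio_pow hc (wdagger w) hq.
rewrite /wdagger size_take.
have -> : ((size w).-1 < size w)%N by case: (size w) hs.
move=> h; have := lt_le_trans hw h.
have : q ^+ (size w).-1 <= q ^+ L.
  by apply: ler_wiXn2l; rewrite ?ltW //; case: (size w) hs.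
move=> h2 h3; have := lt_le_trans h3 h2; rewrite ltNge (ltW hL) //.
Qed.

Lemma exists_Ir (i0 : I) (r : R) : 0 < r < 1 -> exists v, in_Ir c r v.
Proof.
move=> hr; have [q [hq Hq]] := exists_q hc.
have r0 : 0 < r by case/andP: hr.
have [L hL] := geo_small hq r0.
suff H : forall m p, r < wratio c p -> (L <= size p + m)%N -> exists v, in_Ir c r v.
  by apply: (H L [::]); rewrite ?add0n // /wratio big_nil; case/andP: hr.
elim => [|m IH] p hp hs.
  have := wratio_pow hc p Hq; rewrite addn0 in hs.
  have h2 : q ^+ size p <= q ^+ L.
    by apply: ler_wiXn2l => //; case/andP: hq => /ltW ? /ltW.
  move=> h1; have := le_lt_trans (le_trans h1 h2) hL; rewrite ltNge (ltW hp) //.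
case: (leP (wratio c (p ++ [:: i0])) r) => h.
  by exists (p ++ [:: i0]); rewrite /in_Ir wdagger_rcons h hp.
by apply: (IH _ h); rewrite size_cat /=; lia.
Qed.

Lemma cont_sum (s : seq (seq I)) (g : seq I -> R -> R) :
  (forall w, continuous (g w)) -> continuous (fun a => \sum_(w <- s) g w a).
Proof.
move=> hg; elim: s => [|w s IH].
  have -> : (fun a : R => \sum_(w <- [::]) g w a) = fun=> 0.
    by apply: funext => a; rewrite big_nil.
  exact: cst_continuous.
have -> : (fun a : R => \sum_(w0 <- w :: s) g w0 a) =
          (g w) + (fun a => \sum_(w0 <- s) g w0 a).
  by apply: funext => a; rewrite big_cons.
by move=> x; apply: continuousD; [exact: hg|exact: IH].
Qed.

Lemma powR_expR (x a : R) : 0 < x -> x `^ a = expR (a * ln x).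
Proof. by move=> x0; rewrite /powR gt_eqF. Qed.

Lemma alpha_exists (i0 : I) (r : R) : 0 < r < 1 -> exists a, alpha_spec X S c r a.
Proof.
move=> hr; have [q [hq Hq]] := exists_q hc.
have r0 : 0 < r by case/andP: hr.
have [L hL] := geo_small hq r0.
set reps := dedup [seq w <- words I L | `[< in_Ir c r w >]].
have Hin : forall w, w \in reps -> in_Ir c r w.
  by move=> w /dedup_sub; rewrite mem_filter => /andP[/asboolP].
have Hcov : forall w, in_Ir c r w -> exists2 v, v \in reps & wequiv X S w v.
  move=> w hw; apply: dedup_cover; rewrite mem_filter; apply/andP; split.
    exact/asboolP.
  by apply: words_mem; exact: (Ir_size hq Hq hL hw).
have [v0 hv0] := exists_Ir i0 hr.
have [v1 hv1 _] := Hcov _ hv0.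
set f := fun a => \sum_(w <- reps) wratio c w `^ a.
have f0 : 1 <= f 0.
  rewrite /f (bigD1_seq v1) //= ?dedup_uniq // powRr0 lerDl.
  by apply: sumr_ge0 => w _; exact: powR_ge0.
pose N : R := (size reps).+1%:R.
have N0 : 0 < N by rewrite ltr0n.
have Ni : 0 < N^-1 by rewrite invr_gt0.
have [K hK] := geo_small hr Ni.
have fK : f K%:R < 1.
  have : f K%:R <= \sum_(w <- reps) r ^+ K.
    rewrite /f !big_seq; apply: ler_sum => w hw; rewrite -powR_mulrn ?(ltW r0) //.
    apply: ge0_ler_powR; rewrite ?nnegrE ?ler0n ?(ltW r0) ?powR_ge0 //.
      exact: ltW (wratio_gt0 hc w).
    by case/andP: (Hin w hw).
  rewrite big_const_seq count_predT.
  move=> h; apply: le_lt_trans h _.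
  have -> : iter (size reps) (+%R (r ^+ K)) 0 = r ^+ K *+ size reps.
    by elim: (size reps) => [|m IH] //=; rewrite IH mulrS.
  rewrite -mulr_natr.
  have hN : (size reps)%:R < N by rewrite ltr_nat.
  have rK0 : 0 <= r ^+ K by rewrite exprn_ge0 // ltW.
  have : r ^+ K * N < 1.
    by rewrite -ltr_pdivlMr // div1r.
  have : r ^+ K * (size reps)%:R <= r ^+ K * N by rewrite ler_wpM2l // ltW.
  lra.
have fc : continuous f.
  have -> : f = fun a => \sum_(w <- reps) expR (a * ln (wratio c w)).
    apply: funext => a; apply: eq_bigr => w _.
    by rewrite powR_expR // wratio_gt0.
  apply: cont_sum => w x; apply: continuous_comp; last exact: continuous_expR.
  exact: mulrr_continuous.
have [a _ fa] : exists2 a, a \in `[0, K%:R] & f a = 1.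
  apply: IVT; first by rewrite ler0n.
    exact: continuous_subspaceT.
  by rewrite ge_min le_max (ltW fK) f0 orbT.
exists a, reps; split; [exact: dedup_uniq|exact: Hin|exact: Hcov| |exact: fa].
move=> v1' v2' h1 h2 e; exact: dedup_inj h1 h2 e.
Qed.

Lemma spec_ge0 (r a : R) : r < 1 -> alpha_spec X S c r a -> 0 <= a.
Proof.
move=> r1 [reps [_ Hin _ _ hs]].
rewrite leNgt; apply/negP => a0.
case: reps Hin hs => [|w s] Hin; first by rewrite big_nil => /eqP; rewrite eq_sym oner_eq0.
rewrite big_cons => hs.
have hw : in_Ir c r w by apply: Hin; rewrite inE eqxx.
have c0 := wratio_gt0 hc w.
have c1 : wratio c w < 1 by case/andP: hw => h _; exact: le_lt_trans h r1.
have : 1 < wratio c w `^ a.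
  rewrite powR_expR // expR_gt1.
  have : ln (wratio c w) < 0 by rewrite ln_lt0 // c0 c1.
  nra.
have : 0 <= \sum_(j <- s) wratio c j `^ a by apply: sumr_ge0 => j _; exact: powR_ge0.
lra.
Qed.

Lemma alpha_ge0 (r : R) : r < 1 -> 0 <= alpha X S c r.
Proof.
move=> r1; rewrite /alpha; case: xgetP => [a -> ha|_] //.
exact: spec_ge0 ha.
Qed.

Lemma alpha_reps (i0 : I) (r u : R) : 0 < r < 1 -> alpha X S c r < u ->
  exists reps : seq (seq I),
    [/\ (forall w, w \in reps -> in_Ir c r w),
        (forall w, in_Ir c r w -> exists2 v, v \in reps & wequiv X S w v)
      & \sum_(w <- reps) (wratio c w) `^ u < 1].
Proof.
move=> hr hu.
have := xgetPex 0 (alpha_exists i0 hr); rewrite -/(alpha X S c r).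
set a := alpha X S c r => -[reps [_ Hin Hcov _ hs]].
have hu' : a < u by [].
exists reps; split => //.
rewrite -hs.
case: reps Hin {Hcov} hs => [|w s] Hin; first by rewrite big_nil => /eqP; rewrite eq_sym oner_eq0.
move=> _; rewrite !big_cons.
have lt_term : forall v, v \in w :: s -> wratio c v `^ u < wratio c v `^ a.
  move=> v hv; have hw := Hin v hv.
  have c0 := wratio_gt0 hc v.
  have c1 : wratio c v < 1 by case/andP: hw => h _; exact: le_lt_trans h (proj2 (andP hr)).
  rewrite !powR_expR // ltr_expR.
  have : ln (wratio c v) < 0 by rewrite ln_lt0 // c0 c1.
  move: hu'; nra.
apply: ltr_leD; first by apply: lt_term; rewrite inE eqxx.
rewrite [X in X <= _]big_seq [X in _ <= X]big_seq; apply: ler_sum => v hv; apply: ltW; apply: lt_term; by rewrite inE hv orbT.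
Qed.

End Alpha.

Section NumL.
Variable R : realType.

Lemma negpow_gt0 (d u : R) : 0 < d -> 0 < d `^ (- u).
Proof. by move=> d0; rewrite powR_gt0. Qed.

Lemma negpow_anti (u a b : R) : 0 <= u -> 0 < a -> a <= b -> b `^ (- u) <= a `^ (- u).
Proof.
move=> u0 a0 ab; have b0 : 0 < b by exact: lt_le_trans a0 ab.
rewrite !powR_expR // ler_expR.
have : ln a <= ln b by rewrite ler_ln ?posrE.
nra.
Qed.

Lemma negpow_ge1 (u d : R) : 0 <= u -> 0 < d -> d <= 1 -> 1 <= d `^ (- u).
Proof.
move=> u0 d0 d1; rewrite powR_expR // -expR0 ler_expR.
have := ln_le0 d1; nra.
Qed.

Lemma negpow_div (u d x : R) : 0 < d -> 0 < x ->
  (d / x) `^ (- u) = d `^ (- u) * x `^ u.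
Proof.
move=> d0 x0; rewrite !powR_expR ?divr_gt0 // ln_div ?posrE // -expRD.
congr expR; ring.
Qed.

Lemma pow_negpow (u x : R) : 0 < x -> x `^ u * x `^ (- u) = 1.
Proof.
by move=> x0; rewrite !powR_expR // -expRD -expR0; congr expR; ring.
Qed.

End NumL.

Section BigU.
Variables (R : realType) (n : nat) (I : finType).
Local Notation V := 'rV[R]_n.

Definition bigU (ws : seq (seq I)) (Af : seq I -> set V) : set V :=
  [set x | exists2 w, w \in ws & Af w x].

Lemma cover_bigU ws Af d (b : seq I -> R) :
  (forall w, w \in ws -> exists m, coverable (Af w) d m /\ m%:R <= b w) ->
  exists m, coverable (bigU ws Af) d m /\ m%:R <= \sum_(w <- ws) b w.
Proof.
elim: ws => [|w ws IH] H.
  exists 0%N; split; last by rewrite big_nil.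
  exists (fun=> set0); split => // x [w] //.
have [m1 [h1 b1]] := H w (mem_head _ _).
have [m2 [h2 b2]] : exists m, coverable (bigU ws Af) d m /\ m%:R <= \sum_(w <- ws) b w.
  by apply: IH => v hv; apply: H; rewrite inE hv orbT.
exists (m1 + m2)%N; split.
  apply: coverable_sub (coverableU h1 h2).
  move=> x [v]; rewrite inE => /orP[/eqP ->|hv] Ax; first by left.
  by right; exists v.
by rewrite natrD big_cons lerD.
Qed.

Lemma exists_min (ws : seq (seq I)) (f : seq I -> R) :
  (forall w, 0 < f w) -> exists m0, 0 < m0 /\ forall w, w \in ws -> m0 <= f w.
Proof.
move=> hf; elim: ws => [|w ws [m [m0 Hm]]]; first by exists 1.
exists (Num.min m (f w)); split; first by rewrite lt_min m0 hf.
move=> v; rewrite inE => /orP[/eqP ->|/Hm h]; first by rewrite ge_min lexx orbT.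
by rewrite ge_min h.
Qed.

End BigU.

Section Key.
Variables (R : realType) (n : nat) (I : finType).
Local Notation V := 'rV[R]_n.
Local Notation dist := (@eucl_dist R n).
Variables (X : set V) (S : I -> V -> V) (c : I -> R).
Hypothesis hc : forall i, 0 < c i < 1.
Hypothesis hSX : forall i x, X x -> X (S i x).
Hypothesis hsim : forall i x y, X x -> X y ->
  dist (S i x) (S i y) = c i * dist x y.
Variables (FC C : set V).
Hypothesis hFCX : FC `<=` X.
Hypothesis hCX : C `<=` X.
Hypothesis hFC : FC = (\bigcup_(i in setT) (S i @` FC)) `|` C.
Hypothesis hFC0 : FC !=set0.
Hypothesis hC0 : C !=set0.
Variable D : R.
Hypothesis hD0 : 0 < D.
Hypothesis hD : forall x y, X x -> X y -> dist x y <= D.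

Lemma FC_cases x : FC x -> (exists i z, FC z /\ x = S i z) \/ C x.
Proof.
move=> Fx; have : ((\bigcup_(i in setT) (S i @` FC)) `|` C) x by rewrite -hFC.
case=> [[i _ [z Fz <-]]|Cx]; last by right.
by left; exists i, z.
Qed.

Lemma C_sub_FC : C `<=` FC.
Proof. by move=> x Cx; rewrite hFC; right. Qed.

Lemma FC_T i x : FC x -> FC (S i x).
Proof. by move=> Fx; rewrite hFC; left; exists i => //; exists x. Qed.

Lemma FC_decomp (rho q : R) L : rho < 1 -> 0 < q < 1 -> (forall i, c i <= q) -> q ^+ L < rho ->
  FC `<=` [set x | exists v z, in_Ir c rho v /\ FC z /\ x = wmap S v z] `|`
         [set x | exists w z, (size w <= L)%N /\ C z /\ x = wmap S w z].
Proof.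
move=> r1 hq Hq hL.
have small : forall p, rho < wratio c p -> (size p < L)%N.
  move=> p hp; rewrite ltnNge; apply/negP => hs.
  have h1 := wratio_pow hc p Hq.
  have h2 : q ^+ size p <= q ^+ L.
    by apply: ler_wiXn2l => //; case/andP: hq => /ltW ? /ltW.
  by have := le_lt_trans (le_trans h1 h2) hL; rewrite ltNge (ltW hp).
suff H : forall m p y, rho < wratio c p -> (L <= size p + m)%N -> FC y ->
  (exists v z, in_Ir c rho v /\ FC z /\ wmap S p y = wmap S v z) \/
  (exists w z, (size w <= L)%N /\ C z /\ wmap S p y = wmap S w z).
  move=> x Fx; have := H L [::] x.
  rewrite /wratio big_nil add0n leqnn /=.
  by move=> /(_ r1 isT Fx) [h|h]; [left|right].
elim => [|m IH] p y hp hs Fy.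
  by have := small p hp; rewrite addn0 in hs; rewrite ltnNge hs.
case: (FC_cases Fy) => [[i [z [Fz ->]]]|Cy].
  have e : wmap S p (S i z) = wmap S (p ++ [:: i]) z by rewrite wmap_cat.
  rewrite e.
  case: (leP (wratio c (p ++ [:: i])) rho) => h.
    by left; exists (p ++ [:: i]), z; rewrite /in_Ir wdagger_rcons h hp.
  by apply: IH => //; rewrite size_cat /=; lia.
by right; exists p, y; split => //; apply: ltnW; apply: small.
Qed.


Lemma key (rho u : R) (reps : seq (seq I)) : 0 < rho < 1 -> 0 < u ->
  (forall w, w \in reps -> in_Ir c rho w) ->
  (forall w, in_Ir c rho w -> exists2 v, v \in reps & wequiv X S w v) ->
  \sum_(w <- reps) wratio c w `^ u < 1 ->
  (upper_box_dim C < u%:E)%E -> (upper_box_dim FC <= u%:E)%E.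
Proof.
move=> hr u0 Hin Hcov hth hCd.
have r0 : 0 < rho by case/andP: hr.
have r1 : rho < 1 by case/andP: hr.
have [q [hq Hq]] := exists_q hc.
have [L hL] := geo_small hq r0.
have Hcover : FC `<=` bigU reps (fun v => wmap S v @` FC) `|`
                     bigU (words I L) (fun w => wmap S w @` C).
  move=> x /(FC_decomp r1 hq Hq hL) [[v [z [hv [Fz ->]]]]|[w [z [hw [Cz ->]]]]].
    have [v' hv' ev] := Hcov v hv.
    left; exists v' => //; exists z => //; rewrite ev //; exact: hFCX.
  by right; exists w; [exact: words_mem|exists z].
have [eC [heC HC]] := ubd_lt hCd.
have eC0 : 0 < eC by case/andP: heC.
have eC1 : eC < 1 by case/andP: heC.
pose e0 := eC / 2.
have e00 : 0 < e0 by rewrite divr_gt0.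
have e0C : e0 < eC by rewrite /e0 ltr_pdivrMr // ltr_pMr // ltr1n.
have [k0 [hk0 bk0]] : exists k, coverable C e0 k /\ k%:R < e0 `^ (- u).
  apply: box_ratio_lt => //; first by rewrite e00 (lt_trans e0C eC1).
  by apply: HC; rewrite e00 e0C.
pose K := Num.max 1 (e0 `^ (- u) * D `^ u).
have K1 : 1 <= K by rewrite le_max lexx.
have CB : forall d, 0 < d -> d <= D ->
    exists k, coverable C d k /\ k%:R <= K * d `^ (- u).
  move=> d d0 dD; case: (ltP d eC) => hd.
    have hd1 : 0 < d < 1 by rewrite d0 (lt_trans hd eC1).
    have hd2 : 0 < d < eC by rewrite d0 hd.
    have [k [hk bk]] := box_ratio_lt hC0 hd1 (HC d hd2).
    exists k; split => //; apply: le_trans (ltW bk) _.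
    by rewrite ler_pMl ?negpow_gt0.
  exists k0; split; first by apply: coverable_le hk0; exact: ltW (lt_le_trans e0C hd).
  apply: le_trans (ltW bk0) _.
  have h1 : D `^ (- u) <= d `^ (- u) by apply: negpow_anti => //; exact: ltW.
  have h2 : e0 `^ (- u) = e0 `^ (- u) * D `^ u * D `^ (- u).
    by rewrite -mulrA pow_negpow // mulr1.
  rewrite h2; apply: ler_pM => //.
  - by rewrite mulr_ge0 // powR_ge0.
  - exact: powR_ge0.
  - by rewrite le_max lexx orbT.
have [m0 [m00 Hm0]] := exists_min reps (wratio_gt0 hc).
have Hvr : forall v, v \in reps -> wratio c v <= rho by move=> v /Hin /andP[].
pose th := \sum_(w <- reps) wratio c w `^ u.
pose M := \sum_(w <- words I L) (1 : R).
have M0 : 0 <= M by apply: sumr_ge0.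
pose A := Num.max 1 (Num.max ((D / m0) `^ u) (M * K / (1 - th))).
have A1 : 1 <= A by rewrite le_max lexx.
have A2 : (D / m0) `^ u <= A by rewrite le_max le_max lexx orbT.
have A3 : M * K / (1 - th) <= A by rewrite le_max le_max lexx !orbT.
have A3' : M * K <= A * (1 - th) by rewrite -ler_pdivrMr // subr_gt0.
have P : forall k d, 0 < d -> D * rho ^+ k <= d ->
    exists m, coverable FC d m /\ m%:R <= Num.max 1 (A * d `^ (- u)).
  elim => [|k IH] d d0 hd.
    exists 1%N; split; last by rewrite le_max lexx.
    apply: coverable_one => x y Fx Fy; apply: le_trans (hD (hFCX Fx) (hFCX Fy)) _.
    by rewrite expr0 mulr1 in hd.
  case: (leP D d) => hDd.
    exists 1%N; split; last by rewrite le_max lexx.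
    apply: coverable_one => x y Fx Fy; exact: le_trans (hD (hFCX Fx) (hFCX Fy)) hDd.
  have Hv : forall v, v \in reps -> exists m,
      coverable (wmap S v @` FC) d m /\ m%:R <= A * d `^ (- u) * wratio c v `^ u.
    move=> v hv.
    have cv0 := wratio_gt0 hc v.
    have cvr := Hvr v hv.
    have dv0 : 0 < d / wratio c v by rewrite divr_gt0.
    have hdv : D * rho ^+ k <= d / wratio c v.
      rewrite ler_pdivlMr //; apply: le_trans hd.
      rewrite exprSr mulrA; apply: ler_wpM2l => //.
      by rewrite mulr_ge0 ?(ltW hD0) // exprn_ge0 // ltW.
    have [m [hm bm]] := IH _ dv0 hdv.
    exists m; split.
      have := coverable_img hFCX (wmap_sim hSX hsim v) (ltW cv0) hm.
      by rewrite mulrC divfK // gt_eqF.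
    have hge : 1 <= A * (d / wratio c v) `^ (- u).
      have h1 : (D / m0) `^ (- u) <= (d / wratio c v) `^ (- u).
        apply: negpow_anti; rewrite ?(ltW u0) //.
        apply: ler_pM; rewrite ?(ltW d0) ?invr_ge0 ?(ltW m00) ?(ltW hDd) //.
          exact: ltW cv0.
        by rewrite lef_pV2 ?posrE // Hm0.
      rewrite -(pow_negpow u (divr_gt0 hD0 m00)).
      by apply: ler_pM; rewrite ?powR_ge0.
    have e2 : A * d `^ (- u) * wratio c v `^ u = A * (d / wratio c v) `^ (- u).
      by rewrite negpow_div // mulrA.
    by apply: le_trans bm _; rewrite e2 ge_max hge lexx.
  have HCw : forall w, w \in words I L -> exists m,
      coverable (wmap S w @` C) d m /\ m%:R <= K * d `^ (- u).
    move=> w _; have [k' [hk bk]] := CB d d0 (ltW hDd).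
    exists k'; split => //.
    apply: coverable_le (_ : wratio c w * d <= d) _.
      by apply: ler_piMl; [exact: ltW d0|exact: wratio_le1].
    exact: coverable_img hCX (wmap_sim hSX hsim w) (ltW (wratio_gt0 hc w)) hk.
  have [m1 [h1 b1]] := @cover_bigU R n I reps (fun v => wmap S v @` FC) d
     (fun v => A * d `^ (- u) * wratio c v `^ u) Hv.
  have [m2 [h2 b2]] := @cover_bigU R n I (words I L) (fun w => wmap S w @` C) d
     (fun=> K * d `^ (- u)) HCw.
  exists (m1 + m2)%N; split.
    exact: coverable_sub Hcover (coverableU h1 h2).
  rewrite natrD.
  have e1 : \sum_(w <- reps) A * d `^ (- u) * wratio c w `^ u = A * d `^ (- u) * th.
    by rewrite /th big_distrr.
  have e2 : \sum_(w <- words I L) K * d `^ (- u) = M * (K * d `^ (- u)).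
    by rewrite /M big_distrl /=; apply: eq_bigr => w _; rewrite mul1r.
  rewrite e1 in b1; rewrite e2 in b2.
  apply: le_trans (lerD b1 b2) _.
  rewrite le_max; apply/orP; right.
  have P0 := negpow_gt0 u d0.
  nra.
have Fin : forall d, 0 < d -> d < Num.min D 1 ->
    exists m, coverable FC d m /\ m%:R <= A * d `^ (- u).
  move=> d d0; rewrite lt_min => /andP[dD d1].
  have [k hk] := geo_small hr (divr_gt0 d0 hD0).
  rewrite ltr_pdivlMr // mulrC in hk.
  have [m [hm bm]] := P k d d0 (ltW hk).
  exists m; split => //; apply: le_trans bm _.
  rewrite ge_max lexx andbT.
  have : 1 <= d `^ (- u) by apply: negpow_ge1; rewrite ?(ltW u0) // ltW.
  nra.
apply/lee_addgt0Pr => eps eps0.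
have lnA0 : 0 <= ln A by rewrite ln_ge0.
have A0 : 0 < A by apply: lt_le_trans ltr01 A1.
pose e := Num.min (Num.min D 1 / 2) (expR (- (ln A / eps))).
have mD0 : 0 < Num.min D 1 by rewrite lt_min hD0 ltr01.
have e0' : 0 < e by rewrite lt_min divr_gt0 // expR_gt0.
have eh : e <= Num.min D 1 / 2 by rewrite ge_min lexx.
have emD : e < Num.min D 1.
  by apply: le_lt_trans eh _; rewrite ltr_pdivrMr // ltr_pMr // ltr1n.
have e1' : e < 1 by apply: lt_le_trans emD _; rewrite ge_min lexx orbT.
apply: (@ubd_le R n FC _ e); first by rewrite e0' e1'.
move=> d /andP[d0 de].
have hd1 : 0 < d < 1 by rewrite d0 (lt_trans de e1').
have [m [hm bm]] := Fin d d0 (lt_trans de emD).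
apply: le_trans (box_ratio_ub hFC0 hd1 hm bm) _.
rewrite lee_fin.
have lg := dlog_gt0 hd1.
rewrite lnM ?posrE ?negpow_gt0 // ln_powR.
have hl : ln d < - (ln A / eps).
  rewrite -(expRK (- (ln A / eps))) ltr_ln ?posrE ?expR_gt0 //.
  by apply: lt_le_trans de _; rewrite ge_min lexx orbT.
have : ln A < eps * (- ln d).
  have : ln A / eps < - ln d by lra.
  by rewrite ltr_pdivrMr // mulrC.
rewrite ler_pdivrMr //.
nra.
Qed.

End Key.

Theorem theorem5p1 (R : realType) (n : nat) (I : finType)
  (X : set 'rV[R]_n) (S : I -> 'rV[R]_n -> 'rV[R]_n) (c : I -> R)
  (C FC F0 : set 'rV[R]_n) :
  compact X ->
  (forall i, 0 < c i < 1) ->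
  (forall i x, X x -> X (S i x)) ->
  (forall i x y, X x -> X y ->
     eucl_dist (S i x) (S i y) = c i * eucl_dist x y) ->
  C `<=` X -> C !=set0 -> compact C ->
  FC `<=` X -> FC !=set0 -> compact FC ->
  FC = (\bigcup_(i in setT) (S i @` FC)) `|` C ->
  F0 `<=` X -> F0 !=set0 -> compact F0 ->
  F0 = \bigcup_(i in setT) (S i @` F0) ->
  (maxe (upper_box_dim F0) (upper_box_dim C) <= upper_box_dim FC)%E /\
  (upper_box_dim FC <= maxe (s_star X S c)%:E (upper_box_dim C))%E.
Proof.
move=> cX hc hSX hsim hCX hC0 hCc hFCX hFC0 hFCc hFC hF0X hF00 hF0c hF0.
have [D [D0 HD]] := X_bounded cX.
have hF0' : forall x, F0 x -> exists i y, F0 y /\ x = S i y.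
  move=> x F0x; have : (\bigcup_(i in setT) (S i @` F0)) x by rewrite -hF0.
  by case=> i _ [y F0y <-]; exists i, y.
have hT : forall i x, FC x -> FC (S i x).
  by move=> i x Fx; rewrite hFC; left; exists i => //; exists x.
have hCFC : C `<=` FC by move=> x Cx; rewrite hFC; right.
have hF0FC : F0 `<=` FC := F0_sub_FC hc hSX hsim hFCX hFC0 hFCc hT hF0X hF0' D0 HD.
split.
  rewrite ge_max; apply/andP; split; exact: ubd_mono.
have [i0 _] : exists i0 : I, True.
  by case: hF00 => x /hF0' [i _]; exists i.
have Kfin : forall u, s_star X S c < u -> (upper_box_dim C < u%:E)%E ->
    (upper_box_dim FC <= u%:E)%E.
  move=> u hu hCu.
  have ne : [set alpha X S c r | r in [set r : R | 0 < r < 1]] !=set0.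
    exists (alpha X S c (2^-1)); exists (2^-1) => //.
    by rewrite /= invr_gt0 ltr0n invf_lt1 ?ltr1n.
  have [_ [r hr <-] hy] := inf_lt ne hu.
  have u0 : 0 < u by apply: le_lt_trans hy; apply: alpha_ge0 => //; case/andP: hr.
  have [reps [Hin Hcov hth]] := alpha_reps hc i0 hr hy.
  exact: (key hc hSX hsim hFCX hCX hFC hFC0 hC0 D0 HD hr u0 Hin Hcov hth hCu).
have hm : ((s_star X S c)%:E <= maxe (s_star X S c)%:E (upper_box_dim C))%E.
  by rewrite le_max lexx.
have hm2 : (upper_box_dim C <= maxe (s_star X S c)%:E (upper_box_dim C))%E.
  by rewrite le_max lexx orbT.
move: hm hm2; case: (maxe _ _) => [m0| |] h1 h2 //.
  apply/lee_addgt0Pr => eps eps0; apply: Kfin.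
    rewrite lee_fin in h1; apply: le_lt_trans h1 _; by rewrite ltrDl.
  by apply: le_lt_trans h2 _; rewrite lte_fin ltrDl.
by rewrite leey.
Qed.
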